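(* Let $S=\{(x_1,x_2)\in\mathbb{R}^2:x_1\ge0,\ x_1^2-x_2^3\ge0\}$ and $\tilde S^{o}=\{(x_0,x_1,x_2):x_1\ge0,\ x_0x_1^2-x_2^3\ge0,\ x_0>0\}$, $\tilde S^{c}=\{(x_0,x_1,x_2):x_1\ge0,\ x_0x_1^2-x_2^3\ge0,\ x_0\ge0\}$. Then $\overline{\tilde S^{o}}=\tilde S^{c}$ (so $S$ is closed at $\infty$), the linear form $2X_0+2X_1-3X_2$ is positive on $\mathrm{conv}(\overline{\tilde S^{o}})\setminus\{0\}$ (so $\mathrm{conv}(\overline{\tilde S^{o}})$ is closed and pointed), and consequently, with $\tilde G=\{X_1,X_0X_1^2-X_2^3,X_0,X_0^2+X_1^2+X_2^2-1,1-X_0^2-X_1^2-X_2^2\}$, $\overline{\mathrm{conv}(S)}=\bigcap_{k\ge1}\widetilde{\mathrm{TH}}_k(\tilde G)$.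
   Context: For a finite set $H$ of polynomials, $\mathcal{Q}_k(H)=\{\sum_{j}\sigma_jh_j:h_0=1,\ \sigma_j\text{ sums of squares},\ \deg(\sigma_jh_j)\le2k\}$. $\widetilde{\mathrm{TH}}_k(\tilde G)=\{(x_1,x_2):\tilde l(1,x_1,x_2)\ge0\ \forall\tilde l\in\mathcal{Q}_k(\tilde G)\text{ that is a linear form in }(X_0,X_1,X_2)\text{ or }0\}$. A closed convex cone $K$ is pointed if $K\cap(-K)=\{0\}$. *)

(* Defs.v *)
From Stdlib Require Import Reals List.
Import ListNotations.
Open Scope R_scope.

Definition fn3 := R -> R -> R -> R.

(** A monomial c * X0^a * X1^b * X2^e, stored as ((a,b,e), c). *)
Definition mono := ((nat * nat * nat) * R)%type.
Definition mono_eval (m : mono) (x0 x1 x2 : R) : R :=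
  let '((a, b, e), c) := m in c * x0 ^ a * x1 ^ b * x2 ^ e.
Definition mono_deg (m : mono) : nat :=
  let '((a, b, e), _) := m in (a + b + e)%nat.
Definition poly_eval (l : list mono) (x0 x1 x2 : R) : R :=
  fold_right (fun m s => mono_eval m x0 x1 x2 + s) 0 l.

(** f is a polynomial (function) of total degree <= d.  Over R a polynomial
    is determined by its function, so this is the usual degree bound. *)
Definition is_poly_deg_le (d : nat) (f : fn3) : Prop :=
  exists l : list mono, Forall (fun m => (mono_deg m <= d)%nat) l /\
    forall x0 x1 x2, f x0 x1 x2 = poly_eval l x0 x1 x2.
Definition is_poly (f : fn3) : Prop := exists d, is_poly_deg_le d f.

Definition is_sos (s : fn3) : Prop :=
  exists ps : list fn3, Forall is_poly ps /\
    forall x0 x1 x2, s x0 x1 x2 = fold_right (fun p acc => (p x0 x1 x2) ^ 2 + acc) 0 ps.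

Definition one3 : fn3 := fun _ _ _ => 1.

(** f ∈ Q_k(H), where the list H lists h_1,...,h_m and h_0 = 1 is prepended. *)
Definition in_Q (k : nat) (H : list fn3) (f : fn3) : Prop :=
  exists sigmas : list fn3,
    Forall2 (fun s h => is_sos s /\ is_poly_deg_le (2 * k) (fun x0 x1 x2 => s x0 x1 x2 * h x0 x1 x2))
      sigmas (one3 :: H) /\
    forall x0 x1 x2, f x0 x1 x2 =
      fold_right (fun sh acc => fst sh x0 x1 x2 * snd sh x0 x1 x2 + acc) 0
        (combine sigmas (one3 :: H)).

Definition THk (k : nat) (H : list fn3) (x : R * R) : Prop :=
  forall a0 a1 a2 : R,
    in_Q k H (fun X0 X1 X2 => a0 * X0 + a1 * X1 + a2 * X2) ->
    0 <= a0 * 1 + a1 * fst x + a2 * snd x.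

Definition closure2 (A : R * R -> Prop) (p : R * R) : Prop :=
  forall eps, 0 < eps -> exists q, A q /\
    Rabs (fst q - fst p) < eps /\ Rabs (snd q - snd p) < eps.
Definition closure3 (A : R * R * R -> Prop) (p : R * R * R) : Prop :=
  let '(p0, p1, p2) := p in
  forall eps, 0 < eps -> exists q0 q1 q2, A (q0, q1, q2) /\
    Rabs (q0 - p0) < eps /\ Rabs (q1 - p1) < eps /\ Rabs (q2 - p2) < eps.

Definition conv2 (A : R * R -> Prop) (p : R * R) : Prop :=
  exists l : list (R * (R * R)),
    Forall (fun wq => 0 <= fst wq /\ A (snd wq)) l /\
    fold_right (fun wq s => fst wq + s) 0 l = 1 /\
    fst p = fold_right (fun wq s => fst wq * fst (snd wq) + s) 0 l /\
    snd p = fold_right (fun wq s => fst wq * snd (snd wq) + s) 0 l.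

Definition crd0 (q : R * R * R) : R := let '(a, _, _) := q in a.
Definition crd1 (q : R * R * R) : R := let '(_, b, _) := q in b.
Definition crd2 (q : R * R * R) : R := let '(_, _, c) := q in c.

Definition conv3 (A : R * R * R -> Prop) (p : R * R * R) : Prop :=
  exists l : list (R * (R * R * R)),
    Forall (fun wq => 0 <= fst wq /\ A (snd wq)) l /\
    fold_right (fun wq s => fst wq + s) 0 l = 1 /\
    crd0 p = fold_right (fun wq s => fst wq * crd0 (snd wq) + s) 0 l /\
    crd1 p = fold_right (fun wq s => fst wq * crd1 (snd wq) + s) 0 l /\
    crd2 p = fold_right (fun wq s => fst wq * crd2 (snd wq) + s) 0 l.

Definition S_set (x : R * R) : Prop :=
  let '(x1, x2) := x in 0 <= x1 /\ 0 <= x1 ^ 2 - x2 ^ 3.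
Definition St_o (x : R * R * R) : Prop :=
  let '(x0, x1, x2) := x in 0 <= x1 /\ 0 <= x0 * x1 ^ 2 - x2 ^ 3 /\ 0 < x0.
Definition St_c (x : R * R * R) : Prop :=
  let '(x0, x1, x2) := x in 0 <= x1 /\ 0 <= x0 * x1 ^ 2 - x2 ^ 3 /\ 0 <= x0.

Definition Gt : list fn3 :=
  [ (fun X0 X1 X2 => X1);
    (fun X0 X1 X2 => X0 * X1 ^ 2 - X2 ^ 3);
    (fun X0 X1 X2 => X0);
    (fun X0 X1 X2 => X0 ^ 2 + X1 ^ 2 + X2 ^ 2 - 1);
    (fun X0 X1 X2 => 1 - X0 ^ 2 - X1 ^ 2 - X2 ^ 2) ].

(* Main.v *)
Require Import Defs.
From Stdlib Require Import Reals List Lra Lia Psatz Classical.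
Import ListNotations.
Open Scope R_scope.


Definition mono_mul (m1 m2 : mono) : mono :=
  let '((a, b, e), c) := m1 in let '((a', b', e'), c') := m2 in
  ((a + a', b + b', e + e')%nat, c * c').

Lemma mono_mul_eval m1 m2 x0 x1 x2 :
  mono_eval (mono_mul m1 m2) x0 x1 x2 = mono_eval m1 x0 x1 x2 * mono_eval m2 x0 x1 x2.
Proof. destruct m1 as [[[a b] e] c]; destruct m2 as [[[a' b'] e'] c']; simpl.
  rewrite !pow_add; ring. Qed.

Lemma mono_mul_deg m1 m2 : mono_deg (mono_mul m1 m2) = (mono_deg m1 + mono_deg m2)%nat.
Proof. destruct m1 as [[[a b] e] c]; destruct m2 as [[[a' b'] e'] c']; simpl. lia. Qed.

Lemma poly_eval_app l1 l2 x0 x1 x2 :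
  poly_eval (l1 ++ l2) x0 x1 x2 = poly_eval l1 x0 x1 x2 + poly_eval l2 x0 x1 x2.
Proof. induction l1; simpl; [ring| rewrite IHl1; ring]. Qed.

Lemma poly_eval_map m l x0 x1 x2 :
  poly_eval (map (mono_mul m) l) x0 x1 x2 = mono_eval m x0 x1 x2 * poly_eval l x0 x1 x2.
Proof. induction l; simpl; [ring| rewrite IHl, mono_mul_eval; ring]. Qed.

Definition pmul (l1 l2 : list mono) := flat_map (fun m => map (mono_mul m) l2) l1.

Lemma pmul_eval l1 l2 x0 x1 x2 :
  poly_eval (pmul l1 l2) x0 x1 x2 = poly_eval l1 x0 x1 x2 * poly_eval l2 x0 x1 x2.
Proof. induction l1; simpl; [ring|]. unfold pmul in *. simpl.
  rewrite poly_eval_app, poly_eval_map, IHl1; ring. Qed.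

Lemma pmul_deg d1 d2 l1 l2 :
  Forall (fun m => (mono_deg m <= d1)%nat) l1 -> Forall (fun m => (mono_deg m <= d2)%nat) l2 ->
  Forall (fun m => (mono_deg m <= d1 + d2)%nat) (pmul l1 l2).
Proof. intros H1 H2. unfold pmul. apply Forall_flat_map.
  eapply Forall_impl; [|exact H1]. intros m Hm. apply Forall_map.
  eapply Forall_impl; [|exact H2]. intros m' Hm'. cbv beta in *. rewrite mono_mul_deg. lia. Qed.

Lemma polyd_ext d f g : is_poly_deg_le d f -> (forall x0 x1 x2, f x0 x1 x2 = g x0 x1 x2) -> is_poly_deg_le d g.
Proof. intros [l [Hl He]] Hfg. exists l; split; auto. intros; rewrite <- Hfg; auto. Qed.

Lemma polyd_mono d d' f : (d <= d')%nat -> is_poly_deg_le d f -> is_poly_deg_le d' f.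
Proof. intros Hd [l [Hl He]]. exists l; split; auto. eapply Forall_impl; [|exact Hl]. intros m Hm; cbv beta in *; lia. Qed.

Lemma polyd_const c : is_poly_deg_le 0 (fun _ _ _ => c).
Proof. exists [((0,0,0)%nat, c)]. split. repeat constructor. intros; simpl; ring. Qed.

Lemma polyd_X0 : is_poly_deg_le 1 (fun x0 _ _ => x0).
Proof. exists [((1,0,0)%nat, 1)]. split. repeat constructor. intros; simpl; ring. Qed.
Lemma polyd_X1 : is_poly_deg_le 1 (fun _ x1 _ => x1).
Proof. exists [((0,1,0)%nat, 1)]. split. repeat constructor. intros; simpl; ring. Qed.
Lemma polyd_X2 : is_poly_deg_le 1 (fun _ _ x2 => x2).
Proof. exists [((0,0,1)%nat, 1)]. split. repeat constructor. intros; simpl; ring. Qed.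

Lemma polyd_add d1 d2 f g : is_poly_deg_le d1 f -> is_poly_deg_le d2 g ->
  is_poly_deg_le (Nat.max d1 d2) (fun x0 x1 x2 => f x0 x1 x2 + g x0 x1 x2).
Proof. intros [l1 [H1 E1]] [l2 [H2 E2]]. exists (l1 ++ l2). split.
  - apply Forall_app; split; (eapply Forall_impl; [|eassumption]); intros m Hm; cbv beta in *; lia.
  - intros; rewrite poly_eval_app, E1, E2; auto. Qed.

Lemma polyd_mul d1 d2 f g : is_poly_deg_le d1 f -> is_poly_deg_le d2 g ->
  is_poly_deg_le (d1 + d2) (fun x0 x1 x2 => f x0 x1 x2 * g x0 x1 x2).
Proof. intros [l1 [H1 E1]] [l2 [H2 E2]]. exists (pmul l1 l2). split.
  - apply pmul_deg; auto.
  - intros; rewrite pmul_eval, E1, E2; auto. Qed.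

Lemma poly_const c : is_poly (fun _ _ _ => c).
Proof. exists 0%nat; apply polyd_const. Qed.
Lemma poly_X0 : is_poly (fun x0 _ _ => x0). Proof. exists 1%nat; apply polyd_X0. Qed.
Lemma poly_X1 : is_poly (fun _ x1 _ => x1). Proof. exists 1%nat; apply polyd_X1. Qed.
Lemma poly_X2 : is_poly (fun _ _ x2 => x2). Proof. exists 1%nat; apply polyd_X2. Qed.
Lemma poly_add f g : is_poly f -> is_poly g -> is_poly (fun x0 x1 x2 => f x0 x1 x2 + g x0 x1 x2).
Proof. intros [d1 H1] [d2 H2]; eexists; apply polyd_add; eauto. Qed.
Lemma poly_mul f g : is_poly f -> is_poly g -> is_poly (fun x0 x1 x2 => f x0 x1 x2 * g x0 x1 x2).
Proof. intros [d1 H1] [d2 H2]; eexists; apply polyd_mul; eauto. Qed.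
Lemma poly_ext f g : is_poly f -> (forall x0 x1 x2, f x0 x1 x2 = g x0 x1 x2) -> is_poly g.
Proof. intros [d H] E; exists d; eapply polyd_ext; eauto. Qed.
Lemma poly_opp f : is_poly f -> is_poly (fun x0 x1 x2 => - f x0 x1 x2).
Proof. intros H. apply poly_ext with (fun x0 x1 x2 => (fun _ _ _ => -1) x0 x1 x2 * f x0 x1 x2).
  apply poly_mul; auto using poly_const. intros; simpl; ring. Qed.
Lemma poly_sub f g : is_poly f -> is_poly g -> is_poly (fun x0 x1 x2 => f x0 x1 x2 - g x0 x1 x2).
Proof. intros Hf Hg. apply poly_ext with (fun x0 x1 x2 => f x0 x1 x2 + (fun a b c => - g a b c) x0 x1 x2).
  apply poly_add; auto. apply poly_opp; auto. intros; simpl; ring. Qed.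
Lemma poly_pow f n : is_poly f -> is_poly (fun x0 x1 x2 => f x0 x1 x2 ^ n).
Proof. intros Hf. induction n.
  - apply poly_ext with (fun _ _ _ => 1). apply poly_const. intros; simpl; ring.
  - apply poly_ext with (fun x0 x1 x2 => f x0 x1 x2 * (fun a b c => f a b c ^ n) x0 x1 x2).
    apply poly_mul; auto. intros; simpl; ring. Qed.
Lemma poly_div f c : is_poly f -> is_poly (fun x0 x1 x2 => f x0 x1 x2 / c).
Proof. intros Hf. apply poly_ext with (fun x0 x1 x2 => f x0 x1 x2 * (fun _ _ _ => / c) x0 x1 x2).
  apply poly_mul; auto using poly_const. intros; simpl; unfold Rdiv; ring. Qed.

Ltac solve_poly := repeat first
  [ assumption | apply poly_X0 | apply poly_X1 | apply poly_X2 | apply poly_const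
  | apply poly_add | apply poly_sub | apply poly_mul | apply poly_opp | apply poly_div | apply poly_pow ].




Definition ssq (ps : list fn3) x0 x1 x2 := fold_right (fun p acc => (p x0 x1 x2) ^ 2 + acc) 0 ps.

Lemma ssq_nonneg ps x0 x1 x2 : 0 <= ssq ps x0 x1 x2.
Proof. induction ps; simpl; [lra|]. pose proof (pow2_ge_0 (a x0 x1 x2)). fold (ssq ps x0 x1 x2). lra. Qed.

Lemma ssq_app ps qs x0 x1 x2 : ssq (ps ++ qs) x0 x1 x2 = ssq ps x0 x1 x2 + ssq qs x0 x1 x2.
Proof. induction ps; simpl; [ring|]. unfold ssq in *; rewrite IHps; ring. Qed.

Definition pmulf (p : fn3) (qs : list fn3) : list fn3 := map (fun q => fun x0 x1 x2 => p x0 x1 x2 * q x0 x1 x2) qs.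
Lemma ssq_map p qs x0 x1 x2 : ssq (pmulf p qs) x0 x1 x2 = (p x0 x1 x2)^2 * ssq qs x0 x1 x2.
Proof. induction qs; simpl; [ring|]. unfold ssq in *; rewrite IHqs; ring. Qed.

Definition smul (ps qs : list fn3) := flat_map (fun p => pmulf p qs) ps.
Lemma ssq_smul ps qs x0 x1 x2 : ssq (smul ps qs) x0 x1 x2 = ssq ps x0 x1 x2 * ssq qs x0 x1 x2.
Proof. induction ps; simpl; [unfold ssq; simpl; ring|]. unfold smul in *; simpl.
  rewrite ssq_app, ssq_map. unfold smul in IHps. rewrite IHps. unfold ssq; simpl; ring. Qed.

Lemma sos_ssq s : is_sos s <-> exists ps, Forall is_poly ps /\ forall x0 x1 x2, s x0 x1 x2 = ssq ps x0 x1 x2.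
Proof. reflexivity. Qed.

Lemma sos_nonneg s x0 x1 x2 : is_sos s -> 0 <= s x0 x1 x2.
Proof. intros [ps [_ E]]. rewrite E. apply ssq_nonneg. Qed.

Lemma sos_ext s t : is_sos s -> (forall x0 x1 x2, s x0 x1 x2 = t x0 x1 x2) -> is_sos t.
Proof. intros [ps [H E]] E'. exists ps; split; auto. intros; rewrite <- E'; auto. Qed.

Lemma ssq_poly ps : Forall is_poly ps -> is_poly (ssq ps).
Proof. induction 1.
  - apply poly_ext with (fun _ _ _ => 0). apply poly_const. reflexivity.
  - apply poly_ext with (fun x0 x1 x2 => x x0 x1 x2 ^ 2 + ssq l x0 x1 x2). solve_poly. reflexivity. Qed.

Lemma sos_poly s : is_sos s -> is_poly s.
Proof. intros [ps [H E]]. eapply poly_ext; [apply ssq_poly; eauto|]. intros; rewrite E; auto. Qed.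

Lemma sos_sq p : is_poly p -> is_sos (fun x0 x1 x2 => p x0 x1 x2 ^ 2).
Proof. intros H. exists [p]. split. repeat constructor; auto. intros; unfold ssq; simpl; ring. Qed.

Lemma sos_zero : is_sos (fun _ _ _ => 0).
Proof. exists []. split; auto. Qed.

Lemma sos_add s t : is_sos s -> is_sos t -> is_sos (fun x0 x1 x2 => s x0 x1 x2 + t x0 x1 x2).
Proof. intros [ps [H E]] [qs [H' E']]. exists (ps ++ qs). split. apply Forall_app; auto.
  intros. fold (ssq (ps++qs) x0 x1 x2). rewrite ssq_app, E, E'. reflexivity. Qed.

Lemma sos_mul s t : is_sos s -> is_sos t -> is_sos (fun x0 x1 x2 => s x0 x1 x2 * t x0 x1 x2).
Proof. intros [ps [H E]] [qs [H' E']]. exists (smul ps qs). split.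
  - unfold smul. apply Forall_flat_map. eapply Forall_impl; [|exact H]. intros p Hp.
    unfold pmulf. apply Forall_map. eapply Forall_impl; [|exact H']. intros q Hq. solve_poly.
  - intros. fold (ssq (smul ps qs) x0 x1 x2). rewrite ssq_smul, E, E'. reflexivity. Qed.

Lemma sos_const c : 0 <= c -> is_sos (fun _ _ _ => c).
Proof. intros Hc. apply sos_ext with (fun x0 x1 x2 => (fun _ _ _ => sqrt c) x0 x1 x2 ^ 2).
  apply sos_sq, poly_const. intros; simpl. rewrite Rmult_1_r, sqrt_sqrt; auto. Qed.

Lemma sos_scal c s : 0 <= c -> is_sos s -> is_sos (fun x0 x1 x2 => c * s x0 x1 x2).
Proof. intros Hc Hs. apply (sos_mul (fun _ _ _ => c) s); auto using sos_const. Qed.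

Lemma sos_csq c p : 0 <= c -> is_poly p -> is_sos (fun x0 x1 x2 => c * p x0 x1 x2 ^ 2).
Proof. intros Hc Hp. apply (sos_scal c (fun x0 x1 x2 => p x0 x1 x2 ^ 2)); auto using sos_sq. Qed.

Lemma sos_pow s n : is_sos s -> is_sos (fun x0 x1 x2 => s x0 x1 x2 ^ n).
Proof. intros Hs; induction n.
  - apply sos_ext with (fun _ _ _ => 1). apply sos_const; lra. intros; simpl; auto.
  - apply sos_ext with (fun x0 x1 x2 => s x0 x1 x2 * (fun a b c => s a b c ^ n) x0 x1 x2).
    apply sos_mul; auto. intros; simpl; auto. Qed.


Definition hS : fn3 := fun x0 x1 x2 => x0^2+x1^2+x2^2-1.

Definition psi (f : fn3) := exists s q, is_sos s /\ is_poly q /\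
  forall x0 x1 x2, f x0 x1 x2 = s x0 x1 x2 + q x0 x1 x2 * hS x0 x1 x2.

Definition inM (f : fn3) := exists s0 s1 s2 s3 q, is_sos s0 /\ is_sos s1 /\ is_sos s2 /\ is_sos s3 /\ is_poly q /\
  forall x0 x1 x2, f x0 x1 x2 = s0 x0 x1 x2 + s1 x0 x1 x2 * x1 + s2 x0 x1 x2 * (x0 * x1^2 - x2^3)
     + s3 x0 x1 x2 * x0 + q x0 x1 x2 * (x0^2+x1^2+x2^2-1).

Lemma poly_hS : is_poly hS. Proof. unfold hS; solve_poly. Qed.

Lemma psi_poly f : psi f -> is_poly f.
Proof. intros [s [q [Hs [Hq E]]]]. apply poly_ext with (fun x0 x1 x2 => s x0 x1 x2 + q x0 x1 x2 * hS x0 x1 x2).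
  pose proof (sos_poly _ Hs). pose proof poly_hS. solve_poly. intros; rewrite E; auto. Qed.

Lemma psi_sos f : is_sos f -> psi f.
Proof. intros H. exists f, (fun _ _ _ => 0). repeat split; auto using poly_const. intros; ring. Qed.

Lemma psi_ext f g : psi f -> (forall x0 x1 x2, f x0 x1 x2 = g x0 x1 x2) -> psi g.
Proof. intros [s [q [Hs [Hq E]]]] E'. exists s, q. repeat split; auto. intros; rewrite <- E'; auto. Qed.

Lemma psi_add f g : psi f -> psi g -> psi (fun x0 x1 x2 => f x0 x1 x2 + g x0 x1 x2).
Proof. intros [s [q [Hs [Hq E]]]] [s' [q' [Hs' [Hq' E']]]].
  exists (fun x0 x1 x2 => s x0 x1 x2 + s' x0 x1 x2), (fun x0 x1 x2 => q x0 x1 x2 + q' x0 x1 x2).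
  repeat split; auto using sos_add. solve_poly. intros; rewrite E, E'; ring. Qed.

Lemma psi_mul f g : psi f -> psi g -> psi (fun x0 x1 x2 => f x0 x1 x2 * g x0 x1 x2).
Proof. intros Hf Hg. pose proof (psi_poly _ Hf) as Pf. destruct Hf as [s [q [Hs [Hq E]]]].
  destruct Hg as [s' [q' [Hs' [Hq' E']]]].
  exists (fun x0 x1 x2 => s x0 x1 x2 * s' x0 x1 x2),
         (fun x0 x1 x2 => q x0 x1 x2 * s' x0 x1 x2 + f x0 x1 x2 * q' x0 x1 x2).
  pose proof (sos_poly _ Hs'). repeat split; auto using sos_mul. solve_poly.
  intros; rewrite E'. rewrite E. ring. Qed.

Lemma psi_const c : 0 <= c -> psi (fun _ _ _ => c).
Proof. intros; apply psi_sos, sos_const; auto. Qed.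

Lemma psi_hS_const c : psi (fun x0 x1 x2 => c * (x0^2+x1^2+x2^2) - c * hS x0 x1 x2 - c).
Proof. exists (fun _ _ _ => 0), (fun _ _ _ => 0). repeat split; auto using sos_zero, poly_const.
  intros; unfold hS; ring. Qed.

Lemma inM_poly f : inM f -> is_poly f.
Proof. intros [s0 [s1 [s2 [s3 [q [H0 [H1 [H2 [H3 [Hq E]]]]]]]]]].
  apply sos_poly in H0, H1, H2, H3. eapply poly_ext; [|intros; symmetry; apply E]. solve_poly. Qed.

Lemma inM_ext f g : inM f -> (forall x0 x1 x2, f x0 x1 x2 = g x0 x1 x2) -> inM g.
Proof. intros [s0 [s1 [s2 [s3 [q [H0 [H1 [H2 [H3 [Hq E]]]]]]]]]] E'.
  exists s0, s1, s2, s3, q. repeat split; auto. intros; rewrite <- E'; auto. Qed.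

Lemma inM_add f g : inM f -> inM g -> inM (fun x0 x1 x2 => f x0 x1 x2 + g x0 x1 x2).
Proof. intros [s0 [s1 [s2 [s3 [q [H0 [H1 [H2 [H3 [Hq E]]]]]]]]]]
              [t0 [t1 [t2 [t3 [r [G0 [G1 [G2 [G3 [Hr F]]]]]]]]]].
  exists (fun x0 x1 x2 => s0 x0 x1 x2 + t0 x0 x1 x2), (fun x0 x1 x2 => s1 x0 x1 x2 + t1 x0 x1 x2),
         (fun x0 x1 x2 => s2 x0 x1 x2 + t2 x0 x1 x2), (fun x0 x1 x2 => s3 x0 x1 x2 + t3 x0 x1 x2),
         (fun x0 x1 x2 => q x0 x1 x2 + r x0 x1 x2).
  repeat split; auto using sos_add. solve_poly. intros; rewrite E, F; ring. Qed.

Lemma inM_mul_psi f p : inM f -> psi p -> inM (fun x0 x1 x2 => f x0 x1 x2 * p x0 x1 x2).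
Proof. intros Hf Hp. pose proof (inM_poly _ Hf) as Pf.
  destruct Hf as [s0 [s1 [s2 [s3 [q [H0 [H1 [H2 [H3 [Hq E]]]]]]]]]].
  destruct Hp as [s [r [Hs [Hr F]]]].
  exists (fun x0 x1 x2 => s0 x0 x1 x2 * s x0 x1 x2), (fun x0 x1 x2 => s1 x0 x1 x2 * s x0 x1 x2),
         (fun x0 x1 x2 => s2 x0 x1 x2 * s x0 x1 x2), (fun x0 x1 x2 => s3 x0 x1 x2 * s x0 x1 x2),
         (fun x0 x1 x2 => q x0 x1 x2 * s x0 x1 x2 + f x0 x1 x2 * r x0 x1 x2).
  pose proof (sos_poly _ Hs). repeat split; auto using sos_mul. solve_poly.
  intros. rewrite F. unfold hS. rewrite E. ring. Qed.

Lemma inM_scal c f : 0 <= c -> inM f -> inM (fun x0 x1 x2 => c * f x0 x1 x2).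
Proof. intros Hc Hf. eapply inM_ext. apply (inM_mul_psi f (fun _ _ _ => c)); auto using psi_const.
  intros; simpl; ring. Qed.

Lemma inM_cong f g q : inM f -> is_poly q ->
  (forall x0 x1 x2, g x0 x1 x2 = f x0 x1 x2 + q x0 x1 x2 * hS x0 x1 x2) -> inM g.
Proof. intros [s0 [s1 [s2 [s3 [r [H0 [H1 [H2 [H3 [Hr E]]]]]]]]]] Hq F.
  exists s0, s1, s2, s3, (fun x0 x1 x2 => r x0 x1 x2 + q x0 x1 x2).
  repeat split; auto. solve_poly. intros; rewrite F, E; unfold hS; ring. Qed.

Lemma poly_prod_deg s h : is_poly s -> is_poly h -> exists d, is_poly_deg_le d (fun x0 x1 x2 => s x0 x1 x2 * h x0 x1 x2).
Proof. intros Hs Hh. destruct (poly_mul s h Hs Hh) as [d Hd]. eauto. Qed.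

Lemma inM_inQ f k0 : inM f -> exists k, (k0 <= k)%nat /\ in_Q k Gt f.
Proof. intros [s0 [s1 [s2 [s3 [q [H0 [H1 [H2 [H3 [Hq E]]]]]]]]]].
  set (s4 := fun x0 x1 x2 => ((q x0 x1 x2 + 1) / 2) ^ 2).
  set (s5 := fun x0 x1 x2 => ((q x0 x1 x2 - 1) / 2) ^ 2).
  assert (H4 : is_sos s4) by (apply (sos_sq (fun x0 x1 x2 => (q x0 x1 x2 + 1) / 2)); solve_poly).
  assert (H5 : is_sos s5) by (apply (sos_sq (fun x0 x1 x2 => (q x0 x1 x2 - 1) / 2)); solve_poly).
  destruct (poly_prod_deg s0 one3) as [d0 D0]. apply sos_poly; auto. apply poly_const.
  destruct (poly_prod_deg s1 (fun X0 X1 X2 => X1)) as [d1 D1]. apply sos_poly; auto. solve_poly.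
  destruct (poly_prod_deg s2 (fun X0 X1 X2 => X0 * X1 ^ 2 - X2 ^ 3)) as [d2 D2]. apply sos_poly; auto. solve_poly.
  destruct (poly_prod_deg s3 (fun X0 X1 X2 => X0)) as [d3 D3]. apply sos_poly; auto. solve_poly.
  destruct (poly_prod_deg s4 (fun X0 X1 X2 => X0 ^ 2 + X1 ^ 2 + X2 ^ 2 - 1)) as [d4 D4]. apply sos_poly; auto. solve_poly.
  destruct (poly_prod_deg s5 (fun X0 X1 X2 => 1 - X0 ^ 2 - X1 ^ 2 - X2 ^ 2)) as [d5 D5]. apply sos_poly; auto. solve_poly.
  exists (k0 + d0 + d1 + d2 + d3 + d4 + d5)%nat. split; [lia|].
  exists [s0; s1; s2; s3; s4; s5]. split.
  - unfold Gt. repeat constructor; auto; eapply polyd_mono; try eassumption; lia.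
  - intros. simpl. rewrite E. unfold s4, s5, one3. field. Qed.

Lemma fold_comb_nonneg (P : fn3 -> fn3 -> Prop) sig hs x0 x1 x2 :
  Forall2 P sig hs -> (forall s h, P s h -> is_sos s) -> Forall (fun h : fn3 => 0 <= h x0 x1 x2) hs ->
  0 <= fold_right (fun sh acc => fst sh x0 x1 x2 * snd sh x0 x1 x2 + acc) 0 (combine sig hs).
Proof. intros HF HP. induction HF; intros HH; simpl; [lra|]. inversion HH; subst.
  apply Rplus_le_le_0_compat; [|auto]. apply Rmult_le_pos; auto. eapply sos_nonneg; eauto. Qed.

Lemma inQ_sound k f x0 x1 x2 : in_Q k Gt f -> 0 <= x1 -> 0 <= x0 * x1^2 - x2^3 -> 0 <= x0 ->
  x0^2 + x1^2 + x2^2 = 1 -> 0 <= f x0 x1 x2.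
Proof. intros [sig [HF E]] A B C D. rewrite E. eapply fold_comb_nonneg; [exact HF| |].
  - intros s h [Hs _]; auto.
  - unfold Gt, one3. repeat (constructor; [cbv beta; lra|]). constructor. Qed.


Lemma cubic_cert a b : 1 <= a -> 1/2 <= b -> inM (fun x0 x1 x2 => a*x0 + b*x1 - x2).
Proof. intros Ha Hb.
  assert (Ha' : 0 <= a - 1/(4*a)). { assert (0 < a) by lra.
    assert (a - 1/(4*a) = (4*a*a-1)/(4*a)) by (field; lra). rewrite H0.
    apply Rle_mult_inv_pos; nra. }
  assert (Hb' : 0 <= b - 1/(4*b)). { assert (0 < b) by lra.
    assert (b - 1/(4*b) = (4*b*b-1)/(4*b)) by (field; lra). rewrite H0.
    apply Rle_mult_inv_pos; nra. }
  exists (fun _ _ _ => 0),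
    (fun x0 x1 x2 => b * x0^2 + b * (x1 - x2/(2*b))^2 + (b - 1/(4*b)) * x2^2),
    (fun _ _ _ => 1),
    (fun x0 x1 x2 => a * (x0 - x2/(2*a))^2 + (a - 1/(4*a)) * x2^2 + (a-1) * x1^2),
    (fun x0 x1 x2 => -(a*x0 + b*x1 - x2)).
  repeat split.
  - apply sos_zero.
  - repeat apply sos_add; apply sos_csq; try lra; solve_poly.
  - apply sos_const; lra.
  - repeat apply sos_add; apply sos_csq; try lra; solve_poly.
  - solve_poly.
  - intros. field. lra. Qed.

Definition Qf (al be : R) : fn3 := fun x0 x1 x2 =>
  (al*x0 + 2*be*x1)^2 + 3*(al*x0+2*be*x1)*x2 + 9*x2^2.

Lemma Qf_sos al be : is_sos (Qf al be).
Proof. eapply sos_ext. apply sos_add.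
  apply (sos_sq (fun x0 x1 x2 => al*x0 + 2*be*x1 + 3/2*x2)); solve_poly.
  apply (sos_csq (27/4) (fun x0 x1 x2 => x2)); [lra| solve_poly].
  intros; unfold Qf; simpl; field. Qed.

Lemma TQ_cert al be a b : 0 <= al -> 0 <= be -> al * be^2 = 1 -> al <= a -> 2*be <= b ->
  inM (fun x0 x1 x2 => (a*x0 + b*x1 - 3*x2) * Qf al be x0 x1 x2).
Proof. intros H1 H2 H3 H4 H5.
  pose proof (Qf_sos al be) as HQ. pose proof (sos_poly _ HQ) as PQ.
  exists (fun _ _ _ => 0),
    (fun x0 x1 x2 => 8*be*(al*x0 - be*x1)^2 + (b - 2*be) * Qf al be x0 x1 x2),
    (fun _ _ _ => 27),
    (fun x0 x1 x2 => al*(al*x0 - be*x1)^2 + (a - al) * Qf al be x0 x1 x2),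
    (fun _ _ _ => 0).
  repeat split.
  - apply sos_zero.
  - apply sos_add. apply sos_csq; [lra|solve_poly]. apply sos_scal; auto; lra.
  - apply sos_const; lra.
  - apply sos_add. apply sos_csq; [lra|solve_poly]. apply sos_scal; auto; lra.
  - solve_poly.
  - intros. unfold Qf.
    assert (HH : (a * x0 + b * x1 - 3 * x2) * ((al * x0 + 2 * be * x1) ^ 2 + 3 * (al * x0 + 2 * be * x1) * x2 + 9 * x2 ^ 2)
      - (0 + (8 * be * (al * x0 - be * x1) ^ 2 + (b - 2 * be) * ((al * x0 + 2 * be * x1) ^ 2 + 3 * (al * x0 + 2 * be * x1) * x2 + 9 * x2 ^ 2)) * x1 +
     27 * (x0 * x1 ^ 2 - x2 ^ 3) +
     (al * (al * x0 - be * x1) ^ 2 + (a - al) * ((al * x0 + 2 * be * x1) ^ 2 + 3 * (al * x0 + 2 * be * x1) * x2 + 9 * x2 ^ 2)) * x0 +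
     0 * (x0 ^ 2 + x1 ^ 2 + x2 ^ 2 - 1)) = 27 * x0 * x1^2 * (al * be^2 - 1)) by ring.
    rewrite H3 in HH. lra. Qed.


Definition Qg (c d : R) : fn3 := fun x0 x1 x2 =>
  (c*x0 + d*x1)^2 + 3*(c*x0+d*x1)*x2 + 9*x2^2.

Lemma W_up c1 d1 c2 d2 :
  is_sos (fun x0 x1 x2 => (21 + 5/2*(c1^2+d1^2+c2^2+d2^2)) * (x0^2+x1^2+x2^2)
                           - Qg c1 d1 x0 x1 x2 - Qg c2 d2 x0 x1 x2).
Proof.
  eapply sos_ext.
  - apply sos_add. { apply (sos_csq (3/2) (fun x0 x1 x2 => c1*x0 + d1*x1 - x2)); [lra|solve_poly]. }
    apply sos_add. { apply (sos_csq (3/2) (fun x0 x1 x2 => c2*x0 + d2*x1 - x2)); [lra|solve_poly]. }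
    apply sos_add. { apply (sos_csq (5/2) (fun x0 x1 x2 => d1*x0 - c1*x1)); [lra|solve_poly]. }
    apply sos_add. { apply (sos_csq (5/2) (fun x0 x1 x2 => d2*x0 - c2*x1)); [lra|solve_poly]. }
    apply sos_add. { apply (sos_csq 21 (fun x0 x1 x2 => x0)); [lra|solve_poly]. }
    apply sos_add. { apply (sos_csq 21 (fun x0 x1 x2 => x1)); [lra|solve_poly]. }
    apply (sos_csq (5/2*(c1^2+d1^2+c2^2+d2^2)) (fun x0 x1 x2 => x2)); [|solve_poly]. apply Rmult_le_pos; [lra|]. repeat apply Rplus_le_le_0_compat; apply pow2_ge_0.
  - intros; unfold Qg; simpl; field. Qed.

Lemma W_low c1 d1 c2 d2 : c1*d2 - c2*d1 <> 0 -> exists m, 0 < m /\ m <= 9 /\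
  is_sos (fun x0 x1 x2 => Qg c1 d1 x0 x1 x2 + Qg c2 d2 x0 x1 x2 - m * (x0^2+x1^2+x2^2)).
Proof. intros HD.
  set (S := c1^2+d1^2+c2^2+d2^2). set (D := c1*d2 - c2*d1).
  assert (HD1 : 0 < D*D) by (apply Rsqr_pos_lt; exact HD).
  assert (HL : (c1^2+c2^2)*(d1^2+d2^2) - D*D = (c1*d1+c2*d2)^2) by (unfold D; ring).
  assert (HS : 0 < S). { pose proof (pow2_ge_0 (c1*d1+c2*d2)).
    assert (0 < (c1^2+c2^2)*(d1^2+d2^2)) by lra.
    assert (0 <= c1^2+c2^2) by (pose proof (pow2_ge_0 c1); pose proof (pow2_ge_0 c2); lra).
    assert (0 <= d1^2+d2^2) by (pose proof (pow2_ge_0 d1); pose proof (pow2_ge_0 d2); lra).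
    unfold S. destruct (Rle_lt_dec (c1^2+c2^2) 0).
    - assert (c1^2+c2^2 = 0) by lra. rewrite H3 in H0. lra.
    - lra. }
  assert (HD2 : 0 < D^2 / (2*S)). { apply Rmult_lt_0_compat; [|apply Rinv_0_lt_compat; lra].
    replace (D^2) with (D*D) by ring. exact HD1. }
  set (m := Rmin 9 (D^2/(2*S))).
  assert (m1 : m <= 9) by apply Rmin_l. assert (m2 : m <= D^2/(2*S)) by apply Rmin_r.
  assert (m3 : 0 < m) by (unfold m; apply Rmin_glb_lt; lra).
  exists m. split; [lra| split; [lra|]].
  eapply sos_ext.
  - apply sos_add. { apply (sos_csq (D^2/(2*S) - m) (fun x0 x1 x2 => x0)); [lra|solve_poly]. }
    apply sos_add. { apply (sos_csq (D^2/(2*S) - m) (fun x0 x1 x2 => x1)); [lra|solve_poly]. }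
    apply sos_add. { apply (sos_csq (9 - m) (fun x0 x1 x2 => x2)); [lra|solve_poly]. }
    apply sos_add. { apply (sos_csq (1/2) (fun x0 x1 x2 => c1*x0 + d1*x1 + 3*x2)); [lra|solve_poly]. }
    apply sos_add. { apply (sos_csq (1/2) (fun x0 x1 x2 => c2*x0 + d2*x1 + 3*x2)); [lra|solve_poly]. }
    apply sos_add. { apply (sos_csq (1/(2*S)) (fun x0 x1 x2 => d1*(c1*x0 + d1*x1) + d2*(c2*x0+d2*x1))); [|solve_poly]. apply Rlt_le, Rmult_lt_0_compat; [lra| apply Rinv_0_lt_compat; lra]. }
    apply (sos_csq (1/(2*S)) (fun x0 x1 x2 => c1*(c1*x0 + d1*x1) + c2*(c2*x0+d2*x1))); [|solve_poly]. apply Rlt_le, Rmult_lt_0_compat; [lra| apply Rinv_0_lt_compat; lra].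
  - intros; unfold Qg, D, S; simpl. unfold S in HS. field. lra. Qed.

Lemma geom (W U : fn3) (N : R) : 0 < N -> is_poly W ->
  (forall x0 x1 x2, U x0 x1 x2 = (N * (x0^2+x1^2+x2^2) - W x0 x1 x2) / N) -> is_sos U ->
  forall n, exists f q, is_sos f /\ is_poly q /\ forall x0 x1 x2,
    W x0 x1 x2 * f x0 x1 x2 = 1 - U x0 x1 x2 ^ n + q x0 x1 x2 * hS x0 x1 x2.
Proof. intros HN HW HU SU. pose proof (sos_poly _ SU) as PU. induction n.
  - exists (fun _ _ _ => 0), (fun _ _ _ => 0). repeat split; auto using sos_zero, poly_const.
    intros; simpl; ring.
  - destruct IHn as [f [q [Hf [Hq E]]]].
    exists (fun x0 x1 x2 => / N + U x0 x1 x2 * f x0 x1 x2), (fun x0 x1 x2 => 1 + U x0 x1 x2 * q x0 x1 x2).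
    repeat split.
    + apply sos_add. apply sos_const. apply Rlt_le, Rinv_0_lt_compat; auto. apply sos_mul; auto.
    + solve_poly.
    + intros. simpl. transitivity (W x0 x1 x2 / N + U x0 x1 x2 * (W x0 x1 x2 * f x0 x1 x2)).
      unfold Rdiv; ring. rewrite E. rewrite HU. unfold hS. field. lra. Qed.

Lemma powdiff (U : fn3) (rho : R) : 0 <= rho -> is_sos U -> psi (fun x0 x1 x2 => rho - U x0 x1 x2) ->
  forall n, psi (fun x0 x1 x2 => rho ^ n - U x0 x1 x2 ^ n).
Proof. intros Hr SU Hd. induction n.
  - eapply psi_ext. apply (psi_const 0). lra. intros; simpl; ring.
  - eapply psi_ext. apply psi_add.
    apply (psi_mul (fun _ _ _ => rho) _ (psi_const rho Hr) IHn).
    apply (psi_mul (fun x0 x1 x2 => U x0 x1 x2 ^ n) _ (psi_sos _ (sos_pow U n SU)) Hd).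
    intros; simpl; ring. Qed.

Lemma assemble (T E W1 W2 U f q : fn3) (eps : R) (n : nat) :
  is_poly T -> inM (fun x0 x1 x2 => T x0 x1 x2 * W1 x0 x1 x2) -> inM (fun x0 x1 x2 => T x0 x1 x2 * W2 x0 x1 x2) ->
  inM E -> inM (fun x0 x1 x2 => T x0 x1 x2 + 3 * E x0 x1 x2) -> is_sos U -> is_sos f -> is_poly q ->
  (forall x0 x1 x2, (W1 x0 x1 x2 + W2 x0 x1 x2) * f x0 x1 x2 = 1 - U x0 x1 x2 ^ n + q x0 x1 x2 * hS x0 x1 x2) ->
  psi (fun x0 x1 x2 => eps - 3 * U x0 x1 x2 ^ n) ->
  inM (fun x0 x1 x2 => T x0 x1 x2 + eps * E x0 x1 x2).
Proof. intros PT H1 H2 HE HTE SU Sf Pq Eq Pe.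
  apply inM_cong with
    (fun x0 x1 x2 => (T x0 x1 x2 * W1 x0 x1 x2 * f x0 x1 x2 + T x0 x1 x2 * W2 x0 x1 x2 * f x0 x1 x2)
       + (T x0 x1 x2 + 3 * E x0 x1 x2) * U x0 x1 x2 ^ n + E x0 x1 x2 * (eps - 3 * U x0 x1 x2 ^ n))
    (fun x0 x1 x2 => - (T x0 x1 x2 * q x0 x1 x2)).
  - apply inM_add; [apply inM_add|].
    + apply inM_add.
      * apply (inM_mul_psi (fun x0 x1 x2 => T x0 x1 x2 * W1 x0 x1 x2) f H1 (psi_sos _ Sf)).
      * apply (inM_mul_psi (fun x0 x1 x2 => T x0 x1 x2 * W2 x0 x1 x2) f H2 (psi_sos _ Sf)).
    + apply (inM_mul_psi _ (fun x0 x1 x2 => U x0 x1 x2 ^ n) HTE (psi_sos _ (sos_pow U n SU))).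
    + apply (inM_mul_psi _ _ HE Pe).
  - solve_poly.
  - intros. assert (Eq' := Eq x0 x1 x2).
    transitivity (T x0 x1 x2 * ((W1 x0 x1 x2 + W2 x0 x1 x2) * f x0 x1 x2) + T x0 x1 x2 * U x0 x1 x2 ^ n
       + eps * E x0 x1 x2 - T x0 x1 x2 * q x0 x1 x2 * hS x0 x1 x2).
    + rewrite Eq'. ring.
    + ring. Qed.


Lemma sep_cert x1 x2 : 0 <= x1 -> x1^2 < x2^3 -> exists a0 a1 a2,
  inM (fun X0 X1 X2 => a0*X0 + a1*X1 + a2*X2) /\ a0 + a1*x1 + a2*x2 < 0.
Proof. intros H1 H2.
  assert (Hx2 : 0 < x2). { destruct (Rlt_or_le 0 x2); auto.
    assert (x2^3 <= 0) by (pose proof (pow2_ge_0 x2); replace (x2^3) with (x2 * x2^2) by ring; nra).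
    pose proof (pow2_ge_0 x1). lra. }
  set (sq := sqrt x2). assert (Hsq : 0 < sq) by (apply sqrt_lt_R0; auto).
  assert (Hsq2 : sq * sq = x2) by (apply sqrt_sqrt; lra).
  set (al := x2). set (be := / sq).
  assert (Hbe : 0 < be) by (apply Rinv_0_lt_compat; auto).
  assert (Hab : al * be^2 = 1) by (unfold al, be; rewrite <- Hsq2; field; lra).
  assert (Hlt : x1 < x2 * sq). { destruct (Rlt_or_le x1 (x2*sq)); auto.
    assert ((x2*sq)^2 <= x1^2) by (apply pow_incr; split; [nra|auto]).
    assert ((x2*sq)^2 = x2^3) by (replace ((x2*sq)^2) with (x2*x2*(sq*sq)) by ring; rewrite Hsq2; ring).
    lra. }
  set (G := 3*x2 - al - 2*be*x1).
  assert (HG : 0 < G). { unfold G, al, be.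
    assert (2 * / sq * x1 < 2 * x2). { apply Rmult_lt_reg_r with sq; auto.
      replace (2 * / sq * x1 * sq) with (2 * x1) by (field; lra). nra. }
    lra. }
  set (de := G / (4*be*x1 + 4)).
  assert (Hde : 0 < de) by (unfold de; apply Rdiv_lt_0_compat; nra).
  set (ep := G / (4*(2 + 2*x1 + x2))).
  assert (Hep : 0 < ep) by (unfold ep; apply Rdiv_lt_0_compat; lra).
  set (al' := al / (1+de)^2). set (be' := be * (1+de)).
  assert (Hal : 0 < al) by (unfold al; lra).
  assert (Hal' : 0 < al') by (unfold al'; apply Rdiv_lt_0_compat; [lra| apply pow_lt; lra]).
  assert (Hab' : al' * be'^2 = 1) by (unfold al', be'; rewrite <- Hab; field; lra).
  assert (Hal'le : al' <= al). { unfold al'. apply Rmult_le_reg_r with ((1+de)^2). apply pow_lt; lra.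
    replace (al / (1+de)^2 * (1+de)^2) with al by (field; lra). nra. }
  set (T := fun X0 X1 X2 => al*X0 + 2*be*(1+de)*X1 - 3*X2).
  set (E := fun X0 X1 X2 => 2*X0 + 2*X1 - X2).
  set (W1 := Qf al be). set (W2 := Qf al' be').
  set (N := 21 + 5/2*(al^2+(2*be)^2+al'^2+(2*be')^2)).
  assert (HN : 21 <= N). { unfold N. assert (0 <= al^2+(2*be)^2+al'^2+(2*be')^2).
    repeat apply Rplus_le_le_0_compat; apply pow2_ge_0. lra. }
  assert (HD : al * (2*be') - al' * (2*be) <> 0). {
    assert (al * (2*be') - al' * (2*be) = 2*al*be*((1+de)^3 - 1)/(1+de)^2) by (unfold al', be'; field; lra).
    rewrite H. apply Rgt_not_eq. apply Rdiv_lt_0_compat; [|apply pow_lt; lra].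
    assert (1 < (1+de)^3) by (replace ((1+de)^3) with (1 + de*(3 + 3*de + de^2)) by ring; nra). nra. }
  destruct (W_low al (2*be) al' (2*be') HD) as [m [Hm0 [Hm9 Hmsos]]].
  pose proof (W_up al (2*be) al' (2*be')) as Hup. fold N in Hup.
  set (U := fun x0 x1 x2 => (N * (x0^2+x1^2+x2^2) - (W1 x0 x1 x2 + W2 x0 x1 x2)) / N).
  assert (SU : is_sos U). { eapply sos_ext. apply (sos_scal (/N)); [|exact Hup].
    apply Rlt_le, Rinv_0_lt_compat; lra. intros; unfold U, W1, W2, Qf, Qg. field. lra. }
  assert (PW : is_poly (fun x0 x1 x2 => W1 x0 x1 x2 + W2 x0 x1 x2)).
  { pose proof (sos_poly _ (Qf_sos al be)). pose proof (sos_poly _ (Qf_sos al' be')). solve_poly. }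
  set (rho := 1 - m / N).
  assert (Hrho0 : 0 <= rho). { unfold rho. assert (m / N <= 1). apply Rmult_le_reg_r with N. lra.
    unfold Rdiv; rewrite Rmult_assoc, Rinv_l; lra. lra. }
  assert (Hrho1 : rho < 1). { unfold rho. assert (0 < m/N) by (apply Rdiv_lt_0_compat; lra). lra. }
  assert (Hd : psi (fun x0 x1 x2 => rho - U x0 x1 x2)).
  { exists (fun x0 x1 x2 => / N * (Qg al (2*be) x0 x1 x2 + Qg al' (2*be') x0 x1 x2 - m * (x0^2+x1^2+x2^2))),
         (fun _ _ _ => - rho).
    repeat split. apply sos_scal; auto. apply Rlt_le, Rinv_0_lt_compat; lra. apply poly_const.
    intros; unfold U, W1, W2, Qf, Qg, hS, rho. field. lra. }
  destruct (pow_lt_1_zero rho) with (y := ep / 3) as [n Hn].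
  { rewrite Rabs_right; lra. } { lra. }
  specialize (Hn n (le_n n)). rewrite Rabs_right in Hn by (apply Rle_ge, pow_le; auto).
  destruct (geom (fun x0 x1 x2 => W1 x0 x1 x2 + W2 x0 x1 x2) U N) with (n := n) as [f [q [Sf [Pq Eq]]]];
    [lra| exact PW | intros; unfold U; reflexivity | exact SU|].
  assert (Pe : psi (fun x0 x1 x2 => ep - 3 * U x0 x1 x2 ^ n)).
  { eapply psi_ext. apply psi_add. apply (psi_const (ep - 3*rho^n)). lra.
    apply (psi_mul (fun _ _ _ => 3) _ (psi_const 3 ltac:(lra)) (powdiff U rho Hrho0 SU Hd n)).
    intros; simpl; ring. }
  assert (HTE : inM (fun x0 x1 x2 => T x0 x1 x2 + 3 * E x0 x1 x2)).
  { eapply inM_ext. apply (inM_scal 6). lra.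
    apply (cubic_cert ((al+6)/6) ((2*be*(1+de)+6)/6)).
    lra. assert (0 <= 2*be*(1+de)) by nra. lra.
    intros; unfold T, E; field. }
  assert (HE : inM E) by (unfold E; apply cubic_cert; lra).
  assert (H1' : inM (fun x0 x1 x2 => T x0 x1 x2 * W1 x0 x1 x2)).
  { eapply inM_ext. apply (TQ_cert al be al (2*be*(1+de))); try lra. nra.
    intros; unfold T, W1; reflexivity. }
  assert (H2' : inM (fun x0 x1 x2 => T x0 x1 x2 * W2 x0 x1 x2)).
  { eapply inM_ext. apply (TQ_cert al' be' al (2*be*(1+de))); try lra.
    unfold be'; nra. unfold be'; lra.
    intros; unfold T, W2; reflexivity. }
  assert (PT : is_poly T) by (unfold T; solve_poly).
  pose proof (assemble T E W1 W2 U f q ep n PT H1' H2' HE HTE SU Sf Pq Eq Pe) as Hfin.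
  exists (al + 2*ep), (2*be*(1+de) + 2*ep), (-3 - ep). split.
  - eapply inM_ext. exact Hfin. intros; unfold T, E; ring.
  - assert (2*be*de*x1 <= G/2). { unfold de.
      replace (2 * be * (G / (4 * be * x1 + 4)) * x1) with (G * (2*be*x1) / (4*be*x1+4)) by (field; nra).
      apply Rmult_le_reg_r with (4*be*x1+4). nra.
      replace (G * (2 * be * x1) / (4 * be * x1 + 4) * (4 * be * x1 + 4)) with (G*(2*be*x1)) by (field; nra).
      nra. }
    assert (ep * (2 + 2*x1 + x2) = G/4) by (unfold ep; field; lra).
    assert (ep * (2 + 2*x1 - x2) <= G/4) by nra.
    assert (al + 2 * ep + (2 * be * (1 + de) + 2 * ep) * x1 + (-3 - ep) * x2
      = - G + 2*be*de*x1 + ep * (2 + 2*x1 - x2)) by (unfold G; ring).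
    unfold al in *. lra. Qed.


Lemma abs_bnd x M : Rabs x <= M -> -M <= x <= M.
Proof. intros H. split; [pose proof (Rabs_pos x)|]; unfold Rabs in H; destruct (Rcase_abs x); lra. Qed.

Lemma mul_bnd x y X Y : -X <= x <= X -> -Y <= y <= Y -> -(X*Y) <= x*y <= X*Y.
Proof. intros [H1 H2] [H3 H4]. assert (0 <= X) by lra. assert (0 <= Y) by lra. split; nra. Qed.

Lemma f_close p0 p1 p2 a0 a1 a2 e M : 0 < e <= 1 -> Rabs p0 <= M -> Rabs p1 <= M -> Rabs p2 <= M ->
  -e <= a0 <= e -> -e <= a1 <= e -> -e <= a2 <= e ->
  (p0+a0)*(p1+a1)^2 - (p2+a2)^3 <= p0*p1^2 - p2^3 + 6*e*(M+1)^2.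
Proof. intros He H0 H1 H2 A0 A1 A2.
  apply abs_bnd in H0, H1, H2.
  assert (HM : 0 <= M) by lra.
  assert (B1 : -(M+1) <= p1 + a1 <= M+1) by lra.
  assert (S1 : 0 <= (p1+a1)^2 <= (M+1)^2) by (split; [apply pow2_ge_0| nra]).
  assert (T1 : a0*(p1+a1)^2 <= e*(M+1)^2) by nra.
  assert (T2 := mul_bnd _ _ _ _ (mul_bnd _ _ _ _ H0 H1) A1).
  assert (A1' : -(e*e) <= a1*a1 <= e*e) by (apply mul_bnd; auto).
  assert (T3 := mul_bnd _ _ _ _ H0 A1').
  assert (T4 := mul_bnd _ _ _ _ (mul_bnd _ _ _ _ H2 H2) A2).
  assert (A2' : -(e*e) <= a2*a2 <= e*e) by (apply mul_bnd; auto).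
  assert (T5 := mul_bnd _ _ _ _ H2 A2').
  assert (T6 := mul_bnd _ _ _ _ A2' A2).
  assert (E : (p0+a0)*(p1+a1)^2 - (p2+a2)^3 - (p0*p1^2 - p2^3) =
    a0*(p1+a1)^2 + 2*(p0*p1*a1) + p0*(a1*a1) - 3*(p2*p2*a2) - 3*(p2*(a2*a2)) - a2*a2*a2) by ring.
  assert (e*e <= e) by nra. assert (e*e*e <= e) by nra.
  assert (M*(e*e) <= M*e) by nra.
  assert (M*M*e + M*e + M*M*e + M*e + e <= 5*e*(M+1)^2) by nra.
  nra. Qed.

Lemma cube_le x y : 0 <= y -> x^3 <= y^3 -> x <= y.
Proof. intros Hy H. destruct (Rle_or_lt x y); auto. exfalso.
  assert (y^3 < x^3). { replace (x^3 - y^3) with ((x-y)*(x^2+x*y+y^2)) by ring.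
    assert (0 < x - y) by lra. assert (0 < x^2+x*y+y^2) by nra.
    assert (0 < (x-y)*(x^2+x*y+y^2)) by (apply Rmult_lt_0_compat; auto). lra. }
  lra. Qed.

Lemma amgm3 u v : 0 <= u -> 0 <= v -> 27*u*v^2 <= (u+2*v)^3.
Proof. intros Hu Hv. assert (0 <= (u-v)^2*(u+8*v)) by (apply Rmult_le_pos; [apply pow2_ge_0|lra]).
  replace ((u+2*v)^3) with (27*u*v^2 + (u-v)^2*(u+8*v)) by ring. lra. Qed.

Lemma cbrt_ex y : 0 < y -> exists mu, 0 < mu /\ mu^3 = y.
Proof. intros Hy. exists (Rpower y (1/3)). split. unfold Rpower; apply exp_pos.
  rewrite <- Rpower_pow by (unfold Rpower; apply exp_pos). rewrite Rpower_mult.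
  replace (1/3 * INR 3) with 1 by (simpl; field). apply Rpower_1; auto. Qed.

Lemma cube_zero c : 0 <= c -> c^3 <= 0 -> c = 0.
Proof. intros H1 H2. destruct (Req_dec c 0); auto. assert (0 < c) by lra.
  assert (0 < c^3) by (apply pow_lt; auto). lra. Qed.

Lemma holder_pos a b c d e f : 0 <= a -> 0 <= b -> 0 <= c -> 0 <= d -> 0 <= e -> 0 <= f ->
  c^3 <= a*b^2 -> f^3 <= d*e^2 -> (c+f)^3 <= (a+d)*(b+e)^2.
Proof. intros Ha Hb Hc Hd He Hf H1 H2.
  destruct (Req_dec (b+e) 0) as [HB|HB].
  { assert (b = 0) by lra. assert (e = 0) by lra. subst.
    assert (c = 0) by (apply cube_zero; auto; nra). assert (f = 0) by (apply cube_zero; auto; nra). subst.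
    simpl; nra. }
  destruct (Req_dec (a+d) 0) as [HA|HA].
  { assert (a = 0) by lra. assert (d = 0) by lra. subst.
    assert (c = 0) by (apply cube_zero; auto; nra). assert (f = 0) by (apply cube_zero; auto; nra). subst.
    simpl; nra. }
  set (A := a+d). set (B := b+e). assert (HA' : 0 < A) by (unfold A; lra). assert (HB' : 0 < B) by (unfold B; lra).
  destruct (cbrt_ex (A/B)) as [mu [Hmu Hmu3]]. apply Rdiv_lt_0_compat; auto.
  set (la := / mu^2). assert (Hla : 0 < la) by (unfold la; apply Rinv_0_lt_compat, pow_lt; auto).
  assert (Hlm : la * mu^2 = 1) by (unfold la; field; lra).
  assert (K1 : 3*c <= la*a + 2*mu*b).
  { apply cube_le. nra. pose proof (amgm3 (la*a) (mu*b)). 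
    assert (27 * (la*a) * (mu*b)^2 = 27*(a*b^2)*(la*mu^2)) by ring. rewrite Hlm in H0.
    assert ((3*c)^3 = 27*c^3) by ring. nra. }
  assert (K2 : 3*f <= la*d + 2*mu*e).
  { apply cube_le. nra. pose proof (amgm3 (la*d) (mu*e)).
    assert (27 * (la*d) * (mu*e)^2 = 27*(d*e^2)*(la*mu^2)) by ring. rewrite Hlm in H0.
    assert ((3*f)^3 = 27*f^3) by ring. nra. }
  assert (K3 : la * A = mu * B). { unfold la. assert (A = mu^3 * B) by (rewrite Hmu3; field; lra).
    rewrite H at 1. field. lra. }
  assert (c + f <= mu*B) by (unfold A, B in *; nra).
  assert ((c+f)^3 <= (mu*B)^3) by (apply pow_incr; lra).
  assert ((mu*B)^3 = A*B^2) by (replace ((mu*B)^3) with (mu^3*B^3) by ring; rewrite Hmu3; field; lra).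
  unfold A, B in *. lra. Qed.

Lemma holder a b c d e f : 0 <= a -> 0 <= b -> 0 <= d -> 0 <= e ->
  c^3 <= a*b^2 -> f^3 <= d*e^2 -> (c+f)^3 <= (a+d)*(b+e)^2.
Proof. intros Ha Hb Hd He H1 H2.
  assert (R0 : 0 <= (a+d)*(b+e)^2) by (apply Rmult_le_pos; [lra|apply pow2_ge_0]).
  destruct (Rle_or_lt (c+f) 0).
  { assert ((c+f)^3 <= 0) by (replace ((c+f)^3) with ((c+f)*(c+f)^2) by ring; pose proof (pow2_ge_0 (c+f)); nra). lra. }
  set (c' := Rmax c 0). set (f' := Rmax f 0).
  assert (Hc' : 0 <= c') by apply Rmax_r. assert (Hf' : 0 <= f') by apply Rmax_r.
  assert (c <= c') by apply Rmax_l. assert (f <= f') by apply Rmax_l.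
  assert (C1 : c'^3 <= a*b^2). { unfold c'. apply Rmax_case; auto. simpl. rewrite Rmult_0_l. apply Rmult_le_pos; [lra|apply pow2_ge_0]. }
  assert (C2 : f'^3 <= d*e^2). { unfold f'. apply Rmax_case; auto. simpl. rewrite Rmult_0_l. apply Rmult_le_pos; [lra|apply pow2_ge_0]. }
  pose proof (holder_pos a b c' d e f' Ha Hb Hc' Hd He Hf' C1 C2).
  assert ((c+f)^3 <= (c'+f')^3) by (apply pow_incr; lra). lra. Qed.


Lemma closure3_mono (A B : R*R*R -> Prop) p : (forall q, A q -> B q) -> closure3 A p -> closure3 B p.
Proof. destruct p as [[p0 p1] p2]. simpl. intros HAB H eps He.
  destruct (H eps He) as [q0 [q1 [q2 [Hq Hr]]]]. exists q0, q1, q2; split; auto. Qed.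

Lemma Stc_closed p : closure3 St_c p -> St_c p.
Proof. destruct p as [[p0 p1] p2]. simpl. intros H.
  assert (P1 : 0 <= p1). { destruct (Rle_or_lt 0 p1); auto. destruct (H (-p1)) as [q0 [q1 [q2 [[A [B C]] [D [E F]]]]]]; [lra|].
    apply Rabs_def2 in E. lra. }
  assert (P0 : 0 <= p0). { destruct (Rle_or_lt 0 p0); auto. destruct (H (-p0)) as [q0 [q1 [q2 [[A [B C]] [D [E F]]]]]]; [lra|].
    apply Rabs_def2 in D. lra. }
  split; auto. split; auto.
  destruct (Rle_or_lt 0 (p0*p1^2 - p2^3)) as [|Hf]; auto. exfalso.
  set (M := Rabs p0 + Rabs p1 + Rabs p2).
  assert (HM : 0 <= M) by (unfold M; pose proof (Rabs_pos p0); pose proof (Rabs_pos p1); pose proof (Rabs_pos p2); lra).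
  set (fp := p0*p1^2 - p2^3) in *.
  set (e := Rmin 1 (-fp / (12*(M+1)^2))).
  assert (HK : 0 < 12*(M+1)^2) by (apply Rmult_lt_0_compat; [lra| apply pow_lt; lra]).
  assert (He : 0 < e) by (unfold e; apply Rmin_glb_lt; [lra| apply Rdiv_lt_0_compat; lra]).
  assert (He1 : e <= 1) by apply Rmin_l. assert (He2 : e <= -fp / (12*(M+1)^2)) by apply Rmin_r.
  destruct (H e He) as [q0 [q1 [q2 [[A [B C]] [D [E F]]]]]].
  apply Rlt_le, abs_bnd in D, E, F.
  pose proof (f_close p0 p1 p2 (q0-p0) (q1-p1) (q2-p2) e M ltac:(lra)
    ltac:(unfold M; pose proof (Rabs_pos p1); pose proof (Rabs_pos p2); lra)
    ltac:(unfold M; pose proof (Rabs_pos p0); pose proof (Rabs_pos p2); lra)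
    ltac:(unfold M; pose proof (Rabs_pos p0); pose proof (Rabs_pos p1); lra) D E F) as G.
  replace (p0 + (q0 - p0)) with q0 in G by ring. replace (p1 + (q1 - p1)) with q1 in G by ring.
  replace (p2 + (q2 - p2)) with q2 in G by ring.
  assert (6*e*(M+1)^2 <= -fp/2). { apply Rmult_le_compat_l with (r := 6*(M+1)^2) in He2; [|nra].
    replace (6 * (M + 1) ^ 2 * (- fp / (12 * (M + 1) ^ 2))) with (-fp/2) in He2 by (field; nra). nra. }
  fold fp in G. lra. Qed.

Lemma part1 p : closure3 St_o p <-> St_c p.
Proof. split.
  - intros H. apply Stc_closed. eapply closure3_mono; [|exact H].
    intros [[q0 q1] q2]; simpl; intros; lra.
  - destruct p as [[p0 p1] p2]. simpl. intros [A [B C]] eps He.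
    exists (p0 + eps/2), p1, p2. split; [split; [auto| split]|].
    + assert (0 <= eps/2 * p1^2) by (apply Rmult_le_pos; [lra|apply pow2_ge_0]). nra.
    + lra.
    + replace (p0 + eps/2 - p0) with (eps/2) by ring. replace (p1 - p1) with 0 by ring.
      replace (p2 - p2) with 0 by ring. rewrite Rabs_R0, Rabs_right by lra. lra. Qed.

Lemma Stc_scal t q0 q1 q2 : 0 <= t -> St_c (q0,q1,q2) -> St_c (t*q0, t*q1, t*q2).
Proof. unfold St_c; cbv beta iota. intros Ht [A [B C]]. split; [nra| split; [|nra]].
  replace (t * q0 * (t * q1) ^ 2 - (t * q2) ^ 3) with (t^3 * (q0*q1^2 - q2^3)) by ring.
  apply Rmult_le_pos; auto. apply pow_le; auto. Qed.

Lemma Stc_add p0 p1 p2 q0 q1 q2 : St_c (p0,p1,p2) -> St_c (q0,q1,q2) -> St_c (p0+q0, p1+q1, p2+q2).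
Proof. unfold St_c; cbv beta iota. intros [A [B C]] [D [E F]]. split; [lra|split; [|lra]].
  pose proof (holder p0 p1 p2 q0 q1 q2 C A F D ltac:(lra) ltac:(lra)). lra. Qed.

Definition sumw (l : list (R * (R*R*R))) (c : R*R*R -> R) :=
  fold_right (fun wq s => fst wq * c (snd wq) + s) 0 l.

Lemma conv_Stc (A : R*R*R -> Prop) l : (forall q, A q -> St_c q) ->
  Forall (fun wq => 0 <= fst wq /\ A (snd wq)) l -> St_c (sumw l crd0, sumw l crd1, sumw l crd2).
Proof. intros HA. induction 1.
  - simpl. lra.
  - destruct x as [w [[q0 q1] q2]]. destruct H as [Hw Hq]. simpl in Hw, Hq.
    apply HA in Hq. simpl. apply Stc_add; auto. apply Stc_scal; auto. Qed.

Lemma conv_sub p : conv3 (closure3 St_o) p -> St_c p.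
Proof. intros [l [HF [_ [E0 [E1 E2]]]]].
  pose proof (conv_Stc (closure3 St_o) l (fun q H => proj1 (part1 q) H) HF) as H.
  destruct p as [[p0 p1] p2]. simpl in E0, E1, E2. unfold sumw in H. rewrite <- E0, <- E1, <- E2 in H. exact H. Qed.

Lemma form_pos q0 q1 q2 : St_c (q0,q1,q2) -> 0 <= 2*q0 + 2*q1 - 3*q2 /\
  (2*q0 + 2*q1 - 3*q2 = 0 -> q0 = 0 /\ q1 = 0 /\ q2 = 0).
Proof. unfold St_c; cbv beta iota. intros [A [B C]]. destruct (Rle_or_lt q2 0).
  - split; [lra|]. intros; repeat split; lra.
  - assert (Hq0 : 0 < q0). { destruct (Rle_or_lt q0 0); auto. assert (q0 = 0) by lra. subst.
      assert (0 < q2^3) by (apply pow_lt; auto). lra. }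
    pose proof (amgm3 q0 q1 C A).
    assert (3*q2 <= q0 + 2*q1). { apply cube_le. lra.
      replace ((3*q2)^3) with (27*q2^3) by ring. lra. }
    split; [lra|]. intros; lra. Qed.

Lemma fold_form l : Forall (fun wq => 0 <= fst wq /\ St_c (snd wq)) l ->
  0 <= 2 * sumw l crd0 + 2 * sumw l crd1 - 3 * sumw l crd2 /\
  (2 * sumw l crd0 + 2 * sumw l crd1 - 3 * sumw l crd2 = 0 ->
     sumw l crd0 = 0 /\ sumw l crd1 = 0 /\ sumw l crd2 = 0).
Proof. induction 1.
  - simpl. split; [lra|]. intros; repeat split; lra.
  - destruct x as [w [[q0 q1] q2]]. destruct H as [Hw Hq]. simpl in Hw, Hq. simpl.
    destruct (form_pos q0 q1 q2 Hq) as [F1 F2]. destruct IHForall as [G1 G2].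
    assert (E : 2 * (w * q0 + sumw l crd0) + 2 * (w * q1 + sumw l crd1) - 3 * (w * q2 + sumw l crd2)
       = w * (2*q0 + 2*q1 - 3*q2) + (2 * sumw l crd0 + 2 * sumw l crd1 - 3 * sumw l crd2)) by ring.
    unfold sumw in *. simpl in E. rewrite E.
    assert (0 <= w * (2*q0 + 2*q1 - 3*q2)) by (apply Rmult_le_pos; auto).
    split; [lra|]. intros HZ.
    assert (w * (2*q0 + 2*q1 - 3*q2) = 0) by lra.
    destruct (G2 ltac:(lra)) as [Z0 [Z1 Z2]]. rewrite Z0, Z1, Z2.
    destruct (Rmult_integral _ _ H1) as [Hw0|Hf].
    + subst. repeat split; ring.
    + destruct (F2 Hf) as [-> [-> ->]]. repeat split; ring. Qed.

Lemma part2 p : conv3 (closure3 St_o) p -> p <> (0,0,0) -> 0 < 2 * crd0 p + 2 * crd1 p - 3 * crd2 p.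
Proof. intros [l [HF [_ [E0 [E1 E2]]]]] Hp.
  assert (HF' : Forall (fun wq => 0 <= fst wq /\ St_c (snd wq)) l).
  { eapply Forall_impl; [|exact HF]. intros wq [A B]. split; auto. apply part1; auto. }
  destruct (fold_form l HF') as [F1 F2]. unfold sumw in *. rewrite <- E0, <- E1, <- E2 in *.
  destruct (Rle_or_lt (2 * crd0 p + 2 * crd1 p - 3 * crd2 p) 0); [|auto].
  exfalso. destruct (F2 ltac:(lra)) as [Z0 [Z1 Z2]]. apply Hp.
  destruct p as [[p0 p1] p2]. simpl in Z0, Z1, Z2. subst. reflexivity. Qed.


Lemma part3 p : closure3 (conv3 (closure3 St_o)) p -> conv3 (closure3 St_o) p.
Proof. intros H. assert (HS : St_c p) by (apply Stc_closed; eapply closure3_mono; [apply conv_sub| exact H]).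
  exists [(1, p)]. split.
  - constructor; [split; [simpl; lra| apply part1; auto] | constructor].
  - simpl. repeat split; ring. Qed.

Lemma part4 p : conv3 (closure3 St_o) p ->
     conv3 (closure3 St_o) (- crd0 p, - crd1 p, - crd2 p) -> p = (0, 0, 0).
Proof. intros H1 H2. destruct (classic (p = (0,0,0))) as [|Hp]; auto. exfalso.
  pose proof (part2 p H1 Hp) as A.
  destruct p as [[p0 p1] p2]. simpl in *.
  assert (Hn : (-p0, -p1, -p2) <> (0,0,0)). { intros E. injection E; intros. apply Hp.
    f_equal; [f_equal|]; lra. }
  pose proof (part2 _ H2 Hn) as B. simpl in B. lra. Qed.

Lemma S_val k a0 a1 a2 y1 y2 : in_Q k Gt (fun X0 X1 X2 => a0*X0+a1*X1+a2*X2) -> S_set (y1,y2) ->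
  0 <= a0 + a1*y1 + a2*y2.
Proof. intros HQ [A B].
  set (r := sqrt (1 + y1^2 + y2^2)).
  assert (Hpos : 0 < 1 + y1^2 + y2^2) by (pose proof (pow2_ge_0 y1); pose proof (pow2_ge_0 y2); lra).
  assert (Hr : 0 < r) by (apply sqrt_lt_R0; auto).
  assert (Hrr : r * r = 1 + y1^2 + y2^2) by (apply sqrt_sqrt; lra).
  pose proof (inQ_sound k _ (/r) (y1/r) (y2/r) HQ) as H.
  assert (0 <= a0 * / r + a1 * (y1 / r) + a2 * (y2 / r)).
  { apply H.
    - apply Rle_mult_inv_pos; auto.
    - replace (/ r * (y1 / r) ^ 2 - (y2 / r) ^ 3) with ((y1^2 - y2^3) * / (r^3)) by (field; lra).
      apply Rle_mult_inv_pos; auto. apply pow_lt; auto.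
    - apply Rlt_le, Rinv_0_lt_compat; auto.
    - replace ((/ r) ^ 2 + (y1 / r) ^ 2 + (y2 / r) ^ 2) with ((1 + y1^2 + y2^2) / (r*r)) by (field; lra).
      rewrite Hrr. field. lra. }
  replace (a0 * / r + a1 * (y1 / r) + a2 * (y2 / r)) with ((a0 + a1*y1 + a2*y2) * / r) in H0 by (field; lra).
  destruct (Rle_or_lt 0 (a0 + a1*y1 + a2*y2)); auto.
  assert ((a0 + a1*y1 + a2*y2) * / r < 0) by (apply Rmult_neg_pos; [auto| apply Rinv_0_lt_compat; auto]).
  lra. Qed.

Lemma conv2_val k a0 a1 a2 p : in_Q k Gt (fun X0 X1 X2 => a0*X0+a1*X1+a2*X2) -> conv2 S_set p ->
  0 <= a0 * 1 + a1 * fst p + a2 * snd p.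
Proof. intros HQ [l [HF [E1 [E2 E3]]]]. rewrite E2, E3, <- E1. clear E1 E2 E3.
  induction HF; simpl; [lra|].
  destruct x as [w [y1 y2]]. destruct H as [Hw Hy]. simpl in *.
  pose proof (S_val k a0 a1 a2 y1 y2 HQ Hy).
  assert (0 <= w * (a0 + a1*y1 + a2*y2)) by (apply Rmult_le_pos; auto). nra. Qed.

Lemma part5a x : closure2 (conv2 S_set) x -> forall k, (1 <= k)%nat -> THk k Gt x.
Proof. intros H k _ a0 a1 a2 HQ.
  destruct (Rle_or_lt 0 (a0 * 1 + a1 * fst x + a2 * snd x)) as [|Hneg]; auto. exfalso.
  set (F := a0 * 1 + a1 * fst x + a2 * snd x) in *.
  set (eps := - F / (2 * (Rabs a1 + Rabs a2 + 1))).
  assert (HA : 0 < 2 * (Rabs a1 + Rabs a2 + 1)) by (pose proof (Rabs_pos a1); pose proof (Rabs_pos a2); lra).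
  assert (He : 0 < eps) by (apply Rdiv_lt_0_compat; lra).
  destruct (H eps He) as [q [Hq [D1 D2]]].
  pose proof (conv2_val k a0 a1 a2 q HQ Hq) as Hv.
  assert (B1 : a1 * (fst q - fst x) <= Rabs a1 * eps).
  { eapply Rle_trans. apply Rle_abs. rewrite Rabs_mult. apply Rmult_le_compat_l. apply Rabs_pos. lra. }
  assert (B2 : a2 * (snd q - snd x) <= Rabs a2 * eps).
  { eapply Rle_trans. apply Rle_abs. rewrite Rabs_mult. apply Rmult_le_compat_l. apply Rabs_pos. lra. }
  assert (Heq : eps * (2 * (Rabs a1 + Rabs a2 + 1)) = -F) by (unfold eps; field; lra).
  assert (Rabs a1 * eps + Rabs a2 * eps < -F).
  { pose proof (Rabs_pos a1); pose proof (Rabs_pos a2). nra. }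
  unfold F in *. nra. Qed.

Lemma inM_X1 : inM (fun X0 X1 X2 => 0*X0 + 1*X1 + 0*X2).
Proof. exists (fun _ _ _ => 0), (fun _ _ _ => 1), (fun _ _ _ => 0), (fun _ _ _ => 0), (fun _ _ _ => 0).
  repeat split; auto using sos_zero, poly_const. apply sos_const; lra. intros; ring. Qed.

Lemma part5b x : (forall k, (1 <= k)%nat -> THk k Gt x) -> closure2 (conv2 S_set) x.
Proof. intros H.
  assert (Hc : forall a0 a1 a2, inM (fun X0 X1 X2 => a0*X0+a1*X1+a2*X2) -> 0 <= a0 + a1 * fst x + a2 * snd x).
  { intros a0 a1 a2 HM. destruct (inM_inQ _ 1 HM) as [k [Hk HQ]]. pose proof (H k Hk a0 a1 a2 HQ). lra. }
  destruct x as [x1 x2]. simpl in Hc.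
  assert (HS : S_set (x1, x2)).
  { simpl. destruct (Rle_or_lt 0 x1) as [H1|H1].
    - split; auto. destruct (Rle_or_lt 0 (x1^2 - x2^3)) as [|H2]; auto. exfalso.
      destruct (sep_cert x1 x2 H1 ltac:(lra)) as [a0 [a1 [a2 [HM Hv]]]].
      pose proof (Hc a0 a1 a2 HM). lra.
    - exfalso. pose proof (Hc 0 1 0 inM_X1). lra. }
  intros eps He. exists (x1, x2). split.
  - exists [(1, (x1, x2))]. split. constructor; [simpl; split; [lra|auto]|constructor]. simpl. repeat split; ring.
  - simpl. replace (x1 - x1) with 0 by ring. replace (x2 - x2) with 0 by ring. rewrite Rabs_R0. lra. Qed.

Theorem mainTheorem17 :
  (forall p, closure3 St_o p <-> St_c p) /\
  (forall p, conv3 (closure3 St_o) p -> p <> (0, 0, 0) ->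
     0 < 2 * crd0 p + 2 * crd1 p - 3 * crd2 p) /\
  (forall p, closure3 (conv3 (closure3 St_o)) p -> conv3 (closure3 St_o) p) /\
  (forall p, conv3 (closure3 St_o) p ->
     conv3 (closure3 St_o) (- crd0 p, - crd1 p, - crd2 p) -> p = (0, 0, 0)) /\
  (forall x, closure2 (conv2 S_set) x <-> (forall k, (1 <= k)%nat -> THk k Gt x)).
Proof.
  split; [exact part1|]. split; [exact part2|]. split; [exact part3|]. split; [exact part4|].
  intros x; split; [apply part5a| apply part5b]. Qed.
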